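(* Let $S$ be a semigroup and $T$ a subsemigroup of $S$ such that $S\setminus T$ is finite, and suppose that $T$ is finitely right equated. Then $S$ is finitely right equated if and only if $\mathbf{r}_S(a)$ is finitely generated as a right congruence on $S$ for each $a\in S\setminus T$.
   Context: For a semigroup $S$ and $a\in S$, $\mathbf{r}_S(a)=\{(s,t)\in S\times S\mid as=at\}$ (a right congruence); $S$ is finitely right equated if each $\mathbf{r}_S(a)$ is finitely generated as a right congruence, i.e. is the smallest right congruence containing some finite set. *)

(* Defs.v *)
From Stdlib Require Import List ProofIrrelevance.
Import ListNotations.

Record Semigroup := {
  carrier :> Type;
  sg_op : carrier -> carrier -> carrier;
  sg_assoc : forall x y z, sg_op x (sg_op y z) = sg_op (sg_op x y) z
}.

Arguments sg_op {s} _ _.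

Definition subsemigroup (S : Semigroup) (T : S -> Prop) : Prop :=
  forall x y, T x -> T y -> T (sg_op x y).

Definition sub_op (S : Semigroup) (T : S -> Prop) (HT : subsemigroup S T)
  (x y : {x : S | T x}) : {x : S | T x} :=
  exist _ (sg_op (proj1_sig x) (proj1_sig y)) (HT _ _ (proj2_sig x) (proj2_sig y)).

Arguments sub_op {S T} HT x y.

Lemma sub_assoc (S : Semigroup) (T : S -> Prop) (HT : subsemigroup S T) :
  forall x y z, sub_op HT x (sub_op HT y z) = sub_op HT (sub_op HT x y) z.
Proof.
  intros [x hx] [y hy] [z hz]; unfold sub_op; simpl.
  apply eq_sig_hprop; [intros; apply proof_irrelevance|]; simpl.
  apply sg_assoc.
Qed.

Arguments sub_assoc {S T} HT x y z.

Definition sub_sg (S : Semigroup) (T : S -> Prop) (HT : subsemigroup S T) : Semigroup :=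
  {| carrier := {x : S | T x}; sg_op := sub_op HT; sg_assoc := sub_assoc HT |}.

Arguments sub_sg {S T} HT.

Definition right_congruence (S : Semigroup) (rho : S -> S -> Prop) : Prop :=
  (forall s, rho s s) /\
  (forall s t, rho s t -> rho t s) /\
  (forall s t u, rho s t -> rho t u -> rho s u) /\
  (forall s t u, rho s t -> rho (sg_op s u) (sg_op t u)).

Definition rc_gen (S : Semigroup) (X : list (S * S)) (s t : S) : Prop :=
  forall rho : S -> S -> Prop, right_congruence S rho ->
    (forall p, In p X -> rho (fst p) (snd p)) -> rho s t.

Definition fin_gen_rc (S : Semigroup) (rho : S -> S -> Prop) : Prop :=
  exists X : list (S * S), forall s t, rc_gen S X s t <-> rho s t.

Definition r_ann (S : Semigroup) (a : S) (s t : S) : Prop := sg_op a s = sg_op a t.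

Definition fin_right_equated (S : Semigroup) : Prop :=
  forall a : S, fin_gen_rc S (r_ann S a).

(* Main.v *)
Require Import Defs.
From Stdlib Require Import List Classical ProofIrrelevance.
Import ListNotations.

Lemma filt_ex {A : Type} (P : A -> A -> Prop) (m : list (A * A)) :
  exists L, (forall p, In p L -> P (fst p) (snd p)) /\
            (forall p, In p m -> P (fst p) (snd p) -> In p L).
Proof.
  induction m as [|q m IH].
  - exists []; split; simpl; tauto.
  - destruct IH as [L [H1 H2]].
    destruct (classic (P (fst q) (snd q))) as [Hq|Hq].
    + exists (q :: L); split.
      * intros p [<-|Hp]; auto.
      * intros p [<-|Hp] HP; simpl; auto.
    + exists L; split; auto.
      intros p [<-|Hp] HP; [contradiction|auto].
Qed.

Lemma pick_ex {A : Type} (Q : A -> A -> Prop) (l : list A) :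
  exists L, (forall p, In p L -> Q (fst p) (snd p)) /\
            (forall u, In u l -> (exists t, Q u t) -> exists t, Q u t /\ In (u, t) L).
Proof.
  induction l as [|u l IH].
  - exists []; split; simpl; [tauto|intros u []].
  - destruct IH as [L [H1 H2]].
    destruct (classic (exists t, Q u t)) as [[t Ht]|Hn].
    + exists ((u, t) :: L); split.
      * intros p [<-|Hp]; auto.
      * intros v [<-|Hv] Hex.
        -- exists t; split; simpl; auto.
        -- destruct (H2 v Hv Hex) as [t' [Ht' Hin]]; exists t'; simpl; auto.
    + exists L; split; auto.
      intros v [<-|Hv] Hex; [contradiction|auto].
Qed.

Lemma r_ann_rc (S : Semigroup) (a : S) : right_congruence S (r_ann S a).
Proof.
  unfold r_ann; repeat split.
  - intros s t H; auto.
  - intros s t u H1 H2; congruence.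
  - intros s t u H. rewrite !sg_assoc, H; reflexivity.
Qed.

Theorem mainTheorem11 (S : Semigroup) (T : S -> Prop) (HT : subsemigroup S T) :
  (exists l : list S, forall x : S, ~ T x -> In x l) ->
  fin_right_equated (sub_sg HT) ->
  (fin_right_equated S <-> forall a : S, ~ T a -> fin_gen_rc S (r_ann S a)).
Proof.
  intros [l Hl] HfT; split.
  - intros H a _; apply H.
  - intros HU a.
    destruct (classic (T a)) as [ha|ha]; [|apply HU; exact ha].
    destruct (HfT (exist _ a ha)) as [X HX].
    set (XS := map (fun p : {x : S | T x} * {x : S | T x} =>
                      (proj1_sig (fst p), proj1_sig (snd p))) X).
    destruct (filt_ex (fun u v => ~ T u /\ ~ T v /\ sg_op a u = sg_op a v)
                (list_prod l l)) as [L1 [H11 H12]].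
    destruct (pick_ex (fun u t => T t /\ sg_op a u = sg_op a t) l)
      as [L2 [H21 H22]].
    exists (XS ++ L1 ++ L2).
    assert (Tcase : forall rho, right_congruence S rho ->
              (forall p, In p (XS ++ L1 ++ L2) -> rho (fst p) (snd p)) ->
              forall x y, T x -> T y -> sg_op a x = sg_op a y -> rho x y).
    { intros rho Hrho Hgen x y hx hy Hxy.
      assert (Hr : rc_gen (sub_sg HT) X (exist _ x hx) (exist _ y hy)).
      { apply HX. unfold r_ann; simpl; unfold sub_op; simpl.
        apply eq_sig_hprop; [intros; apply proof_irrelevance|]; simpl; exact Hxy. }
      apply (Hr (fun x y => rho (proj1_sig x) (proj1_sig y))).
      - destruct Hrho as [R1 [R2 [R3 R4]]].
        repeat split.
        + intros s; apply R1.
        + intros s t; apply R2.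
        + intros s t u; apply R3.
        + intros s t u; simpl; unfold sub_op; simpl; apply R4.
      - intros p Hp. apply (Hgen (proj1_sig (fst p), proj1_sig (snd p))).
        apply in_or_app; left. unfold XS.
        apply (in_map (fun p : {x : S | T x} * {x : S | T x} =>
                      (proj1_sig (fst p), proj1_sig (snd p))) X p Hp). }
    intros s t; split.
    + intros Hst. apply Hst; [apply r_ann_rc|].
      intros p Hp. apply in_app_or in Hp as [Hp|Hp].
      * unfold XS in Hp. apply in_map_iff in Hp as [q [<- Hq]].
        assert (Hr : r_ann (sub_sg HT) (exist _ a ha) (fst q) (snd q)).
        { apply (proj1 (HX _ _)). intros rho _ Hg. apply Hg; exact Hq. }
        unfold r_ann in Hr; simpl in Hr.
        apply (f_equal (@proj1_sig _ _)) in Hr. exact Hr.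
      * apply in_app_or in Hp as [Hp|Hp].
        -- apply H11 in Hp; tauto.
        -- apply H21 in Hp; tauto.
    + intros Hst rho Hrho Hgen.
      pose proof Hrho as [R1 [R2 [R3 R4]]].
      destruct (classic (T s)) as [hs|hs]; destruct (classic (T t)) as [ht|ht].
      * eapply Tcase; eauto.
      * destruct (H22 t (Hl t ht)) as [t' [[ht' Ht'] Hin]].
        { exists s; split; auto. }
        apply R2. apply R3 with t'.
        -- apply (Hgen (t, t')). apply in_or_app; right; apply in_or_app; right; exact Hin.
        -- eapply Tcase; eauto. unfold r_ann in Hst. congruence.
      * destruct (H22 s (Hl s hs)) as [t' [[ht' Ht'] Hin]].
        { exists t; split; auto. }
        apply R3 with t'.
        -- apply (Hgen (s, t')). apply in_or_app; right; apply in_or_app; right; exact Hin.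
        -- eapply Tcase; eauto. unfold r_ann in Hst. congruence.
      * apply (Hgen (s, t)). apply in_or_app; right; apply in_or_app; left.
        apply H12; simpl; auto. apply in_prod; auto.
Qed.
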